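(* Let $\mathbf G$ be a strict quasi-covering of $\mathbf H$ of radius $r$ via $\gamma$ (with associated covering $\mathbf K$ via $\delta$ and centres $z\in V(G)$, $z_0\in V(K)$). For every $q\in\mathbb N$, if $r\ge q\,|V(H)|$ then the quasi-covering has at least $q$ sheets.
   Context: Graphs are simple, undirected, connected, labelled; $\mathbf H$ is finite. $B_G(v,r)$ is the ball of radius $r$, $B_G(v)=B_G(v,1)$. $\mathbf K$ is a covering of $\mathbf H$ via $\delta$ if $\delta$ is a surjective label-preserving homomorphism whose restriction to each $B_K(v)$ is a bijection onto $B_H(\delta(v))$. $\mathbf G$ is a quasi-covering of $\mathbf H$ of radius $r$ via a partial map $\gamma:V(G)\to V(H)$ if there exist a finite or infinite covering $\mathbf K$ of $\mathbf H$ via $\delta$ (the associated covering) and vertices $z_0\in V(K)$, $z\in V(G)$ (the centre) such that $B_{\mathbf G}(z,r)$ is isomorphic via some $\varphi$ to $B_{\mathbf K}(z_0,r)$, $\gamma$ is defined on $B_G(z,r)$, and $\gamma=\delta\circ\varphi$ on $V(B_G(z,r))$. It is strict if $B_{\mathbf G}(z,r-1)\neq\mathbf G$. Its number of sheets is $\min_{v\in V(H)}\left|\{w\in\delta^{-1}(v)\mid B_K(w,1)\subseteq B_K(z_0,r)\}\right|$. *)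

(* Defs.v *)
From mathcomp Require Import all_boot.
Set Implicit Arguments. Unset Strict Implicit. Unset Printing Implicit Defensive.

Definition simple_graph (V : Type) (adj : V -> V -> Prop) : Prop :=
  (forall x y, adj x y -> adj y x) /\ (forall x, ~ adj x x).

(* within adj x y n  <->  dist(x,y) <= n *)
Fixpoint within (V : Type) (adj : V -> V -> Prop) (x y : V) (n : nat) : Prop :=
  match n with
  | 0 => x = y
  | m.+1 => within adj x y m \/ exists u, within adj x u m /\ adj u y
  end.

Definition connected_graph (V : Type) (adj : V -> V -> Prop) : Prop :=
  forall x y, exists n, within adj x y n.

(* vertex set of the ball B(v,r) (the ball is the induced subgraph on it) *)
Definition ball (V : Type) (adj : V -> V -> Prop) (v : V) (r : nat) : V -> Prop :=
  fun w => within adj v w r.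

Definition is_covering (L : Type) (VK : Type) (adjK : VK -> VK -> Prop) (labK : VK -> L)
    (VH : Type) (adjH : VH -> VH -> Prop) (labH : VH -> L) (delta : VK -> VH) : Prop :=
  [/\ (forall v, exists w, delta w = v),
      (forall x y, adjK x y -> adjH (delta x) (delta y)),
      (forall x, labH (delta x) = labK x)
    & forall v : VK,
      ((forall w, ball adjK v 1 w -> ball adjH (delta v) 1 (delta w)) /\
       (forall w w', ball adjK v 1 w -> ball adjK v 1 w' -> delta w = delta w' -> w = w') /\
       (forall u, ball adjH (delta v) 1 u -> exists w, ball adjK v 1 w /\ delta w = u))].

Definition ball_iso (L : Type) (VG : Type) (adjG : VG -> VG -> Prop) (labG : VG -> L)
    (VK : Type) (adjK : VK -> VK -> Prop) (labK : VK -> L)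
    (z : VG) (z0 : VK) (r : nat) (phi : VG -> VK) : Prop :=
  phi z = z0 /\
  [/\ (forall x, ball adjG z r x -> ball adjK z0 r (phi x)),
      (forall x y, ball adjG z r x -> ball adjG z r y -> phi x = phi y -> x = y),
      (forall y, ball adjK z0 r y -> exists x, ball adjG z r x /\ phi x = y),
      (forall x y, ball adjG z r x -> ball adjG z r y -> (adjG x y <-> adjK (phi x) (phi y)))
    & (forall x, ball adjG z r x -> labK (phi x) = labG x)].

Definition is_quasi_covering (L : Type)
    (VG : Type) (adjG : VG -> VG -> Prop) (labG : VG -> L)
    (VH : Type) (adjH : VH -> VH -> Prop) (labH : VH -> L)
    (VK : Type) (adjK : VK -> VK -> Prop) (labK : VK -> L)
    (gamma : VG -> option VH) (delta : VK -> VH) (z : VG) (z0 : VK) (phi : VG -> VK)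
    (r : nat) : Prop :=
  [/\ simple_graph adjK, connected_graph adjK,
      @is_covering L VK adjK labK VH adjH labH delta,
      @ball_iso L VG adjG labG VK adjK labK z z0 r phi
    & forall x, ball adjG z r x -> gamma x = Some (delta (phi x))].

Definition qc_strict (VG : Type) (adjG : VG -> VG -> Prop) (z : VG) (r : nat) : Prop :=
  exists x, ~ ball adjG z (r - 1) x.

(* the number of sheets, min_{v in V(H)} |{w in delta^-1(v) | B_K(w,1) ⊆ B_K(z0,r)}|,
   is at least q *)
Definition at_least_sheets (VK : Type) (adjK : VK -> VK -> Prop) (VH : finType)
    (delta : VK -> VH) (z0 : VK) (r q : nat) : Prop :=
  forall v : VH, exists f : 'I_q -> VK,
    injective f /\
    forall i, delta (f i) = v /\ (forall u, ball adjK (f i) 1 u -> ball adjK z0 r u).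

(* Main.v *)
Require Import Defs.
From mathcomp Require Import all_boot.
From mathcomp Require Import zify.
From Stdlib Require Import Classical ClassicalEpsilon.
Set Implicit Arguments. Unset Strict Implicit. Unset Printing Implicit Defensive.

Section W.
Variables (V : Type) (adj : V -> V -> Prop).

Lemma within_mono x y k k' : within adj x y k -> k <= k' -> within adj x y k'.
Proof.
move=> H; elim: k' => [|k' IH]; first by rewrite leqn0 => /eqP <-.
rewrite leq_eqVlt => /orP [/eqP <- //|]; rewrite ltnS => /IH Hk; by left.
Qed.

Lemma within_trans x y w a b :
  within adj x y a -> within adj y w b -> within adj x w (a + b).
Proof.
move=> Hxy; elim: b w => [|b IH] w /= Hyw; first by rewrite addn0 -Hyw.
rewrite addnS /=; case: Hyw => [H|[u [Hu Huw]]]; first by left; apply: IH.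
by right; exists u; split => //; apply: IH.
Qed.

Lemma within1 x y : adj x y -> within adj x y 1.
Proof. by move=> H; right; exists x. Qed.

Lemma ball1 v w : ball adj v 1 w -> v = w \/ adj v w.
Proof. by rewrite /ball /=; case=> [->|[u [-> H]]]; [left|right]. Qed.

Lemma within_step z x N t : within adj z x N -> ~ within adj z x t ->
  exists y, within adj z y t.+1 /\ ~ within adj z y t.
Proof.
elim: N x => [|N IH] x /=.
  move=> <- H; exfalso; apply: H; apply: (@within_mono z z 0) => //.
case=> [H|[u [Hu Hux]]] Hn; first exact: IH H Hn.
have [Hut|Hut] := classic (within adj z u t); last exact: IH Hu Hut.
by exists x; split => //=; right; exists u.
Qed.

Lemma exact_exists z x N k : within adj z x N -> ~ within adj z x k ->
  forall t, t <= k.+1 -> exists y, within adj z y t /\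
     forall s, s < t -> ~ within adj z y s.
Proof.
move=> HN Hk [|t] Ht; first by exists z.
have Hxt : ~ within adj z x t by move=> H; apply: Hk; apply: within_mono H _.
have [y [Hy1 Hy2]] := within_step HN Hxt.
exists y; split => // s Hs Hys; apply: Hy2; apply: within_mono Hys _; by [].
Qed.

End W.

Lemma H_side (VH : finType) (adjH : VH -> VH -> Prop) (v : VH) :
  simple_graph adjH -> connected_graph adjH ->
  exists (mu : VH -> nat) (par : VH -> VH),
    [/\ mu v = 0, forall y, mu y = 0 -> y = v, forall y, mu y < #|VH| &
        forall y, y <> v -> adjH y (par y) /\ mu (par y) = (mu y).-1].
Proof.
move=> [Hsym Hirr] Hcon.
pose wb y k := if excluded_middle_informative (within adjH v y k) then true else false.
have wbE y k : wb y k <-> within adjH v y k.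
  by rewrite /wb; case: excluded_middle_informative.
have ex y : exists k, wb y k.
  by have [k Hk] := Hcon v y; exists k; apply/wbE.
pose mu y := ex_minn (ex y).
have muP y : within adjH v y (mu y) /\ forall k, within adjH v y k -> mu y <= k.
  rewrite /mu; case: ex_minnP => k Hk Hmin; split; first by apply/wbE.
  by move=> k' Hk'; apply: Hmin; apply/wbE.
pose S k := [set y | wb y k].
have inS y k : (y \in S k) <-> within adjH v y k.
  by rewrite inE; apply: wbE.
have Sk : forall k, S k = setT \/ k < #|S k|.
  elim=> [|k IH].
    right; rewrite card_gt0; apply/set0Pn; exists v; by apply/inS.
  case: IH => [HT|Hlt].
    left; apply/setP => y; rewrite in_setT; apply/inS; apply: (@within_mono _ _ _ _ k).
      by apply/inS; rewrite HT inE.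
    by [].
  have sub : S k \subset S k.+1.
    by apply/subsetP => y /inS Hy; apply/inS; left.
  have [Heq|Hne] := boolP (#|S k.+1| <= #|S k|).
    have HE : S k = S k.+1 by apply/eqP; rewrite eqEcard sub.
    have stab : forall j y, within adjH v y (k + j) -> within adjH v y k.
      elim=> [|j IHj] y; first by rewrite addn0.
      rewrite addnS /= => -[H|[u [Hu Huy]]]; first exact: IHj.
      have Hu' := IHj _ Hu.
      by apply/inS; rewrite HE; apply/inS; right; exists u.
    left; apply/setP => y; rewrite in_setT; apply/inS.
    have [N HN] := Hcon v y.
    apply: (@within_mono _ _ _ _ k); last by [].
    apply: (stab N); apply: within_mono HN _; by rewrite leq_addl.
  right; rewrite -ltnNge in Hne; by apply: leq_ltn_trans Hne.
have n0 : 0 < #|VH| by apply/card_gt0P; exists v.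
have allW : forall y, within adjH v y #|VH|.-1.
  move=> y; apply/inS.
  case: (Sk #|VH|.-1) => [->|Hlt]; first by rewrite inE.
  have HT : S #|VH|.-1 = setT.
    apply/eqP; rewrite eqEcard subsetT cardsT /=.
    by move: Hlt; rewrite prednK.
  by rewrite HT inE.
pose par y := epsilon (inhabits y) (fun u => within adjH v u (mu y).-1 /\ adjH u y).
exists mu, par; split.
- by apply/eqP; rewrite -leqn0; apply: (muP v).2.
- by move=> y H; have [Hy _] := muP y; rewrite H in Hy.
- move=> y; have [_ Hm] := muP y; apply: leq_ltn_trans (Hm _ (allW y)) _.
  by rewrite prednK.
move=> y Hyv.
have [Hy Hmin] := muP y.
have Hex : exists u, within adjH v u (mu y).-1 /\ adjH u y.
  move: Hy; case E: (mu y) => [|k] /=; first by move=> Hvy; exfalso; exact: Hyv.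
  case=> [H|[u [Hu Huy]]]; last by exists u.
  by have := Hmin _ H; rewrite E ltnn.
have [Hp1 Hp2] := epsilon_spec (inhabits y) _ Hex.
rewrite -/(par y) in Hp1 Hp2.
split; first exact: Hsym.
have [Hpw Hpm] := muP (par y).
apply/eqP; rewrite eqn_leq Hpm //=.
have : within adjH v y (mu (par y)).+1 by right; exists (par y).
move=> /Hmin; lia.
Qed.

Lemma K_side L (VK : Type) (adjK : VK -> VK -> Prop) (labK : VK -> L)
  (VH : finType) (adjH : VH -> VH -> Prop) (labH : VH -> L) (delta : VK -> VH)
  (v : VH) (mu : VH -> nat) (par : VH -> VH) :
  simple_graph adjK -> simple_graph adjH ->
  @is_covering L VK adjK labK VH adjH labH delta ->
  mu v = 0 -> (forall y, mu y = 0 -> y = v) ->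
  (forall y, y <> v -> adjH y (par y) /\ mu (par y) = (mu y).-1) ->
  exists rho : VK -> VK, forall u, [/\ delta (rho u) = v,
     within adjK u (rho u) (mu (delta u)) &
     forall u', delta u' = delta u -> rho u' = rho u -> u' = u].
Proof.
move=> [SK IK] [SH IH] [_ _ _ Hloc] Hmv Hmu0 Hpar.
pose Par u := if delta u == v then u
  else epsilon (inhabits u) (fun w => adjK u w /\ delta w = par (delta u)).
have ParP u : delta u <> v -> adjK u (Par u) /\ delta (Par u) = par (delta u).
  move=> Hu; rewrite /Par (introF eqP Hu);
  apply: (epsilon_spec (inhabits u) (fun w => adjK u w /\ delta w = par (delta u))).
  have [Hadj _] := Hpar _ Hu.
  have [_ [_ Hsurj]] := Hloc u.
  have [w [Hw Hdw]] := Hsurj (par (delta u)) (within1 Hadj).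
  case: (ball1 Hw) => [Huw|Huw]; last by exists w.
  by exfalso; apply: (IH (delta u)); rewrite {2}Huw Hdw.
have ParU u u' : delta u <> v -> delta u' = delta u -> Par u' = Par u -> u' = u.
  move=> Hu Hd HP.
  have Hu' : delta u' <> v by rewrite Hd.
  have [_ [Hinj _]] := Hloc (Par u).
  apply: Hinj => //.
    by apply: within1; apply: SK; rewrite -HP; exact: (ParP u' Hu').1.
  by apply: within1; apply: SK; exact: (ParP u Hu).1.
pose rho u := iter (mu (delta u)) Par u.
exists rho.
suff: forall k u, mu (delta u) = k -> [/\ delta (rho u) = v,
     within adjK u (rho u) k &
     forall u', delta u' = delta u -> rho u' = rho u -> u' = u].
  by move=> H u; apply: H.
elim=> [|k IHk] u Hk.
  have Hdu := Hmu0 _ Hk.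
  have Hr : rho u = u by rewrite /rho Hk.
  split; first by rewrite Hr.
    by rewrite Hr.
  move=> u' Hd; rewrite Hr /rho Hd Hk /=; by [].
have Hdu : delta u <> v by move=> E; rewrite E Hmv in Hk.
have [Hadj Hdp] := ParP u Hdu.
have Hkp : mu (delta (Par u)) = k by rewrite Hdp (Hpar _ Hdu).2 Hk.
have Hr : rho u = rho (Par u) by rewrite /rho Hk Hkp iterSr.
have [IH1 IH2 IH3] := IHk _ Hkp.
split; first by rewrite Hr.
  by rewrite Hr -add1n; apply: within_trans (within1 Hadj) IH2.
move=> u' Hd Hr'.
have Hdu' : delta u' <> v by rewrite Hd.
have [Hadj' Hdp'] := ParP u' Hdu'.
have Hkp' : mu (delta (Par u')) = k by rewrite Hdp' Hd -Hdp Hkp.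
have Hr2 : rho u' = rho (Par u') by rewrite /rho Hd Hk Hkp' iterSr.
apply: ParU => //; apply: IH3.
  by rewrite Hdp' Hdp Hd.
by rewrite -Hr2 Hr' Hr.
Qed.

Lemma G_side L VG adjG labG VK adjK labK (z : VG) (z0 : VK) (phi : VG -> VK) r m :
  connected_graph adjG -> @ball_iso L VG adjG labG VK adjK labK z z0 r phi ->
  qc_strict adjG z r -> m < r ->
  exists P : nat -> VK, (forall t, t <= m -> within adjK z0 (P t) t) /\
     (forall s t, s <= m -> t <= m -> P s = P t -> s = t).
Proof.
move=> Hcon [Hz [_ Hinj _ Hadj _]] [x Hx] Hm.
have [N HN] := Hcon z x.
have Ey t : t <= m -> exists y, within adjG z y t /\
    forall s, s < t -> ~ within adjG z y s.
  move=> Ht; apply: (exact_exists HN Hx); lia.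
have phiW : forall t y, t <= r -> within adjG z y t -> within adjK z0 (phi y) t.
  elim=> [|t IHt] y Ht /=; first by move=> <-.
  case=> [H|[u [Hu Huy]]]; first by left; apply: IHt => //; lia.
  right; exists (phi u); split; first by apply: IHt => //; lia.
  apply/(Hadj u y).
  - by apply: within_mono Hu _; lia.
  - by apply: (@within_mono _ _ _ _ t.+1) => //; right; exists u.
  - by [].
pose Y t := epsilon (inhabits z)
  (fun y => within adjG z y t /\ forall s, s < t -> ~ within adjG z y s).
have YP t : t <= m -> within adjG z (Y t) t /\ forall s, s < t -> ~ within adjG z (Y t) s.
  by move=> Ht; apply: (epsilon_spec (inhabits z) (fun y => within adjG z y t /\ forall s, s < t -> ~ within adjG z y s)); apply: Ey.
exists (fun t => phi (Y t)); split.
  move=> t Ht; apply: phiW; [lia | exact: (YP t Ht).1].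
move=> s t Hs Ht HP.
have HY : Y s = Y t.
  apply: Hinj HP.
  - by apply: within_mono (YP s Hs).1 _; lia.
  - by apply: within_mono (YP t Ht).1 _; lia.
case: (ltngtP s t) => // Hst; exfalso.
- by apply: ((YP t Ht).2 s Hst); rewrite -HY; exact: (YP s Hs).1.
- by apply: ((YP s Hs).2 t Hst); rewrite HY; exact: (YP t Ht).1.
Qed.

Lemma pigeon (T : Type) (VH : finType) m q (g : 'I_m.+1 -> T) (h : 'I_m.+1 -> VH) :
  (forall s t, g s = g t -> h s = h t -> s = t) -> q.-1 * #|VH| <= m ->
  exists f : 'I_q -> T, injective f /\ forall i, exists t, f i = g t.
Proof.
move=> Hinj Hq.
pose e (s t : 'I_m.+1) := if excluded_middle_informative (g s = g t) then true else false.
have eE s t : e s t <-> g s = g t.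
  by rewrite /e; case: excluded_middle_informative.
pose rep t := [arg min_(s < t | e s t) (s : nat)].
have repP t : g (rep t) = g t /\ forall s, g s = g t -> rep t <= s.
  rewrite /rep; case: arg_minnP; first by apply/eE.
  move=> i Hi Hmin; split; first by apply/eE.
  by move=> s Hs; apply: Hmin; apply/eE.
pose R := [set rep t | t in 'I_m.+1].
pose F t := (rep t, h t).
have Finj : injective F.
  move=> s t [E1 E2]; apply: Hinj E2.
  by rewrite -(repP s).1 -(repP t).1 E1.
have HR : m.+1 <= #|R| * #|VH|.
  have : #|F @: [set: 'I_m.+1]| <= #|setX R [set: VH]|.
    apply: subset_leq_card; apply/subsetP => p /imsetP [t _ ->].
    by rewrite inE /= inE andbT; apply/imsetP; exists t.
  by rewrite (card_imset _ Finj) cardsT card_ord cardsX cardsT.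
have HqR : q <= #|R|.
  rewrite leqNgt; apply/negP => HR'.
  have : #|R| * #|VH| <= q.-1 * #|VH| by apply: leq_mul => //; lia.
  lia.
exists (fun i => g (enum_val (widen_ord HqR i))); split; last by move=> i; eexists.
move=> i j /= Hg.
have [t1 _ E1] := imsetP (enum_valP (widen_ord HqR i)).
have [t2 _ E2] := imsetP (enum_valP (widen_ord HqR j)).
rewrite E1 E2 in Hg.
have Hg12 : g t1 = g t2 by rewrite -(repP t1).1 -(repP t2).1.
have Er : rep t1 = rep t2.
  apply/val_inj/eqP; rewrite eqn_leq; apply/andP; split.
    by apply: (repP t1).2; rewrite (repP t2).1.
  by apply: (repP t2).2; rewrite (repP t1).1.
have := enum_val_inj (etrans E1 (etrans Er (esym E2))).
by move=> /(congr1 val) /= H; apply: val_inj.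
Qed.

Theorem mainTheorem13 (L : Type)
    (VG : Type) (adjG : VG -> VG -> Prop) (labG : VG -> L)
    (VH : finType) (adjH : VH -> VH -> Prop) (labH : VH -> L)
    (VK : Type) (adjK : VK -> VK -> Prop) (labK : VK -> L)
    (gamma : VG -> option VH) (delta : VK -> VH) (z : VG) (z0 : VK) (phi : VG -> VK)
    (r q : nat) :
  simple_graph adjG -> connected_graph adjG ->
  simple_graph adjH -> connected_graph adjH ->
  @is_quasi_covering L VG adjG labG VH adjH labH VK adjK labK gamma delta z z0 phi r ->
  @qc_strict VG adjG z r ->
  q * #|VH| <= r ->
  @at_least_sheets VK adjK VH delta z0 r q.
Proof.
move=> _ HconG SH HconH [SK _ Hcov Hiso _] Hstr Hr v.
case: q Hr => [|q'] Hr.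
  by exists (fun _ => z0); split; [move=> [i Hi] | move=> [i Hi]].
have n0 : 0 < #|VH| by apply/card_gt0P; exists v.
have Hm : q' * #|VH| < r by rewrite mulSn in Hr; lia.
have [mu [par [Hmv Hmu0 Hmub Hpar]]] := H_side v SH HconH.
have [rho Hrho] := K_side SK SH Hcov Hmv Hmu0 Hpar.
have [P [HP1 HP2]] := G_side HconG Hiso Hstr Hm.
have Hpinj : forall s t : 'I_(q' * #|VH|).+1, rho (P s) = rho (P t) ->
    delta (P s) = delta (P t) -> s = t.
  move=> s t Hg Hh; apply: val_inj.
  have [_ _ H] := Hrho (P t).
  exact: (HP2 s t (ltn_ord s) (ltn_ord t) (H (P s) Hh Hg)).
have [f [Hfi Hf]] := @pigeon VK VH (q' * #|VH|) q'.+1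
  (fun t => rho (P t)) (fun t => delta (P t)) Hpinj (leqnn _).
exists f; split => // i; have [t ->] := Hf i.
have [H1 H2 _] := Hrho (P t); split => // u Hu.
have Ht := ltn_ord t.
have W := within_trans (within_trans (HP1 t (ltn_ord t)) H2) Hu.
apply: within_mono W _.
have := Hmub (delta (P t)); rewrite mulSn in Hr; lia.
Qed.
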